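(* Let $1\le D\le K-1$ and let $\mathbf{L}$ be the $(K,D)$ AIR matrix. Let $\mathbf{L}(j,k)=1$ with the entry $(j,k)$ lying in the even submatrix $\mathbf{I}_{\lambda_{2i}\times\beta_{2i}\lambda_{2i}}$, and let $j_R=j-(K-\lambda_{2i})$ and $k_R=k-(K-D-\lambda_{2i-1})$ be its row and column offsets within that submatrix. (1) If $i\in[0:\lfloor l/2\rfloor]$ and $k_R\in[0:(\beta_{2i}-1)\lambda_{2i}-1]$, then $d_{right}(j,k)=\lambda_{2i}$. (2) If $i\in[0:\lfloor l/2\rfloor-1]$, $k_R\in[(\beta_{2i}-1)\lambda_{2i}:\beta_{2i}\lambda_{2i}-1]$, and $j_R=c\lambda_{2i+1}+d$ with integers $c\ge0$, $0\le d<\lambda_{2i+1}$, then $d_{right}(j,k)=\lambda_{2i}-c\lambda_{2i+1}$.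
   Context: Notation: $[a:b]=\{a,\dots,b\}$. Let $K,D$ be integers with $1\le D\le K-1$. Define $\lambda_{-1}=K-D$, $\lambda_0=D$ and recursively, by Euclidean division, $\lambda_{i-1}=\beta_i\lambda_i+\lambda_{i+1}$ with $0\le\lambda_{i+1}<\lambda_i$, for $i=0,1,2,\dots$, stopping at the index $l\ge0$ with $\lambda_{l+1}=0$; $\beta_0\ge0$ may be $0$, $\beta_i\ge1$ for $i\ge1$. Set $\lambda_j=0$ for $j>l$. For $n\mid m$, $\mathbf{I}_{m\times n}$ is $m/n$ copies of the $n\times n$ identity stacked vertically and $\mathbf{I}_{n\times m}$ its transpose. The $(K,D)$ AIR matrix $\mathbf{L}$ is the $K\times(K-D)$ $0/1$ matrix (rows $[0:K-1]$, columns $[0:K-D-1]$) that is zero except in the blocks: the $(K-D)\times(K-D)$ identity in rows and columns $[0:K-D-1]$; for $0\le 2i\le l$, the even submatrix $\mathbf{I}_{\lambda_{2i}\times\beta_{2i}\lambda_{2i}}$ in rows $[K-\lambda_{2i}:K-1]$, columns $[K-D-\lambda_{2i-1}:K-D-\lambda_{2i+1}-1]$ (absent if $i=0,\beta_0=0$); for $1\le 2i+1\le l$, the odd submatrix $\mathbf{I}_{\beta_{2i+1}\lambda_{2i+1}\times\lambda_{2i+1}}$ in rows $[K-\lambda_{2i}:K-\lambda_{2i+2}-1]$, columns $[K-D-\lambda_{2i+1}:K-D-1]$. Right-distance: for $\mathbf{L}(j,k)=1$ with $(j,k)$ in an even submatrix, let $k'$ be the smallest column index with $k'>k$ and $\mathbf{L}(j,k')=1$;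 then $d_{right}(j,k)=k'-k$. *)

(* Defs.v *)
From mathcomp Require Import all_boot all_algebra.
Set Implicit Arguments. Unset Strict Implicit. Unset Printing Implicit Defensive.

(* Euclidean sequence.  lamP K D n = (lambda_{n-1}, lambda_n).
   Once a zero is reached the sequence stays zero (lambda_j = 0 for j > l). *)
Fixpoint lamP (K D : nat) (n : nat) : nat * nat :=
  match n with
  | 0 => (K - D, D)
  | n'.+1 => let: (a, b) := lamP K D n' in (b, if b == 0 then 0 else a %% b)
  end.

(* Shifted lambda:  lam K D m = lambda_{m-1}.  So lambda_{-1} = lam K D 0,
   lambda_0 = lam K D 1, lambda_i = lam K D i.+1. *)
Definition lam (K D m : nat) : nat := (lamP K D m).1.

(* beta_i = floor(lambda_{i-1} / lambda_i), for i >= 0. *)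
Definition beta (K D i : nat) : nat := lam K D i %/ lam K D i.+1.

(* l is the stopping index: lambda_{l+1} = 0 and lambda_j > 0 for 0 <= j <= l. *)
Definition is_stop (K D l : nat) : Prop :=
  lam K D l.+2 = 0 /\ forall j, j <= l -> 0 < lam K D j.+1.

(* Membership of (j,k) in the even submatrix number i (i >= 0):
   I_{lambda_{2i} x beta_{2i} lambda_{2i}} in rows [K-lambda_{2i} : K-1],
   columns [K-D-lambda_{2i-1} : K-D-lambda_{2i+1}-1]; present iff 2i <= l
   and not (i = 0 and beta_0 = 0). *)
Definition in_even_block (K D l i j k : nat) : bool :=
  [&& (i.*2 <= l), ~~ ((i == 0) && (beta K D 0 == 0)),
      K - lam K D (i.*2).+1 <= j < K
    & K - D - lam K D i.*2 <= k < K - D - lam K D (i.*2).+2 ].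

(* Entry of the even submatrix (horizontal stack of identities). *)
Definition even_entry (K D i j k : nat) : bool :=
  let n := lam K D (i.*2).+1 in
  (j - (K - n)) == (k - (K - D - lam K D i.*2)) %% n.

(* Odd submatrix number i (for 1 <= 2i+1 <= l):
   I_{beta_{2i+1} lambda_{2i+1} x lambda_{2i+1}} in rows
   [K-lambda_{2i} : K-lambda_{2i+2}-1], columns [K-D-lambda_{2i+1} : K-D-1]. *)
Definition in_odd_block (K D l i j k : nat) : bool :=
  [&& (i.*2).+1 <= l,
      K - lam K D (i.*2).+1 <= j < K - lam K D (i.*2).+3
    & K - D - lam K D (i.*2).+2 <= k < K - D ].

Definition odd_entry (K D i j k : nat) : bool :=
  let n := lam K D (i.*2).+2 in
  (j - (K - lam K D (i.*2).+1)) %% n == k - (K - D - n).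

Definition AIR_entry (K D l j k : nat) : bool :=
  [|| (j < K - D) && (k == j),
      [exists i : 'I_K.+1, in_even_block K D l i j k && even_entry K D i j k]
    | [exists i : 'I_K.+1, in_odd_block K D l i j k && odd_entry K D i j k] ].

Definition AIR (K D l : nat) : 'M[nat]_(K, K - D) :=
  \matrix_(j < K, k < K - D) (AIR_entry K D l j k : nat).

Definition is_dright (m n : nat) (L : 'M[nat]_(m, n)) (j : 'I_m) (k : 'I_n)
    (d : nat) : Prop :=
  0 < d /\
  (exists k' : 'I_n, nat_of_ord k' = k + d /\ L j k' = 1%N) /\
  (forall k'' : 'I_n, k < k'' < k + d -> L j k'' = 0%N).

(* Main.v *)
Require Import Defs.
From mathcomp Require Import all_boot all_algebra zify.

Lemma lamSS K D n : lam K D n.+2 =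
  if lam K D n.+1 == 0 then 0 else lam K D n %% lam K D n.+1.
Proof. by rewrite /lam /=; case: (lamP K D n) => a b /=. Qed.

Lemma lam_le K D n : lam K D n.+2 <= lam K D n.+1.
Proof. rewrite lamSS; case: eqP => [_|h] //; rewrite ltnW // ltn_pmod // lt0n; exact/eqP. Qed.

Lemma lam_lt K D n : 0 < lam K D n.+1 -> lam K D n.+2 < lam K D n.+1.
Proof. move=> h; rewrite lamSS; case: eqP => [e|_]; first by rewrite e in h. by rewrite ltn_pmod. Qed.

Lemma lam_anti K D m n : 1 <= m -> m <= n -> lam K D n <= lam K D m.
Proof.
move=> h1; elim: n => [|n IH]; first by case: m h1.
rewrite leq_eqVlt => /orP[/eqP->//|h]. have := IH h.
case: n IH h => [|n] _ h; first by case: m h1 h.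
have := lam_le K D n. lia.
Qed.

Lemma lam_le0 K D n : n != 1 -> lam K D n <= lam K D 0.
Proof.
case: n => [|[|n]] // _.
have h2 : lam K D 2 <= lam K D 0.
  rewrite lamSS; case: eqP => // _; exact: leq_mod.
have := @lam_anti K D 2 n.+2 isT isT. lia.
Qed.

Lemma lam_divn K D n : 0 < lam K D n.+1 ->
  lam K D n = beta K D n * lam K D n.+1 + lam K D n.+2.
Proof.
move=> h; rewrite lamSS; case: eqP => [e|_]; first by rewrite e in h.
by rewrite /beta -divn_eq.
Qed.

Lemma stop_lt K D l : is_stop K D l -> l < D.
Proof.
case=> _ hp.
have : forall m, m <= l -> m + lam K D m.+1 <= D.
  elim=> [|m IH] h; first by rewrite /lam.
  have := IH (ltnW h). have := lam_lt K D m (hp m (ltnW h)). lia.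
move=> /(_ l (leqnn l)). have := hp l (leqnn l). lia.
Qed.

Lemma mod_neq a t n : 0 < t < n -> (a + t) %% n != a %% n.
Proof.
move=> /andP[t0 tn]; rewrite eqn_mod_dvd ?leq_addr // addKn.
apply/negP => /(dvdn_leq t0); lia.
Qed.

Lemma entryA K D l i (j k : nat) : is_stop K D l -> D <= K - 1 ->
  i.*2 <= l -> ~~ ((i == 0) && (beta K D 0 == 0)) ->
  K - lam K D (i.*2).+1 <= j < K ->
  K - D - lam K D i.*2 <= k < K - D - lam K D (i.*2).+2 ->
  AIR_entry K D l j k = even_entry K D i j k.
Proof.
move=> hs hDK hil hb /andP[hj1 hj2] /andP[hk1 hk2].
have hlD := @stop_lt _ _ _ hs.
have hiK : i < K.+1 by clear -hil hlD hDK; lia.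
have hb1 : lam K D (i.*2).+1 <= D := @lam_anti K D 1 (i.*2).+1 isT isT.
rewrite /AIR_entry.
have -> : (j < K - D) = false by apply/negbTE; rewrite -leqNgt; lia.
have -> : [exists i' : 'I_K.+1, in_even_block K D l i' j k && even_entry K D i' j k]
    = even_entry K D i j k.
  apply/existsP/idP => [[i' /andP[hb' he]]|he].
  - suff e : (i' : nat) = i by rewrite -e.
    move: hb' => /and4P[hi' _ /andP[hj1' hj2'] /andP[hk1' hk2']].
    case: (ltngtP i' i) => // h.
    + have := @lam_anti K D (i'.*2).+2 i.*2 isT (ltac:(lia)). lia.
    + have := @lam_anti K D (i.*2).+2 i'.*2 isT (ltac:(lia)). lia.
  - exists (Ordinal hiK); rewrite /= he andbT /in_even_block hil hb /= hj1 hj2 hk1 hk2.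
    done.
have -> : [exists i' : 'I_K.+1, in_odd_block K D l i' j k && odd_entry K D i' j k]
    = false.
  apply/negbTE/existsP => -[i' /andP[/and3P[hi' /andP[hj1' hj2'] /andP[hk1' hk2']] _]].
  case: (ltnP i' i) => h.
  + have := @lam_anti K D (i'.*2).+3 (i.*2).+1 isT (ltac:(lia)). lia.
  + have := @lam_anti K D (i.*2).+2 (i'.*2).+2 isT (ltac:(lia)). lia.
by rewrite orbF.
Qed.

Lemma entryB K D l i (j k : nat) : is_stop K D l -> D <= K - 1 ->
  (i.*2).+1 <= l ->
  K - lam K D (i.*2).+1 <= j < K - lam K D (i.*2).+3 ->
  K - D - lam K D (i.*2).+2 <= k ->
  AIR_entry K D l j k = in_odd_block K D l i j k && odd_entry K D i j k.
Proof.
move=> hs hDK hil /andP[hj1 hj2] hk1.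
have hlD := @stop_lt _ _ _ hs.
have hiK : i < K.+1 by clear -hil hlD hDK; lia.
have hb1 : lam K D (i.*2).+1 <= D := @lam_anti K D 1 (i.*2).+1 isT isT.
rewrite /AIR_entry.
have -> : (j < K - D) = false by apply/negbTE; rewrite -leqNgt; lia.
have -> : [exists i' : 'I_K.+1, in_even_block K D l i' j k && even_entry K D i' j k]
    = false.
  apply/negbTE/existsP => -[i' /andP[/and4P[hi' _ /andP[hj1' hj2'] /andP[hk1' hk2']] _]].
  case: (ltnP i i') => h.
  + have := @lam_anti K D (i.*2).+3 (i'.*2).+1 isT (ltac:(lia)). lia.
  + have := @lam_anti K D (i'.*2).+2 (i.*2).+2 isT (ltac:(lia)). lia.
have -> : [exists i' : 'I_K.+1, in_odd_block K D l i' j k && odd_entry K D i' j k]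
    = in_odd_block K D l i j k && odd_entry K D i j k.
  apply/existsP/idP => [[i' /andP[hb' he]]|he].
  - suff e : (i' : nat) = i by rewrite -e hb'.
    move: hb' => /and3P[hi' /andP[hj1' hj2'] /andP[hk1' hk2']].
    case: (ltngtP i' i) => // h.
    + have := @lam_anti K D (i'.*2).+3 (i.*2).+1 isT (ltac:(lia)). lia.
    + have := @lam_anti K D (i.*2).+3 (i'.*2).+1 isT (ltac:(lia)). lia.
  - by exists (Ordinal hiK).
done.
Qed.

Lemma nb1 (x : bool) : x -> (x : nat) = 1%N. Proof. by case: x. Qed.
Lemma nb0 (x : bool) : ~~ x -> (x : nat) = 0%N. Proof. by case: x. Qed.

Lemma part1 (K D l : nat) (hD1 : 1 <= D) (hDK : D <= K - 1)
    (hl : is_stop K D l)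
    (i : nat) (j : 'I_K) (k : 'I_(K - D))
    (hblk : in_even_block K D l i j k)
    (h1 : AIR K D l j k = 1%N) :
  (i <= l./2 ->
     k - (K - D - lam K D i.*2) < (beta K D i.*2 - 1) * lam K D (i.*2).+1 ->
     is_dright (AIR K D l) j k (lam K D (i.*2).+1)).
Proof.
cbv zeta.
move: (hblk) => /and4P[hil hb0 /andP[hj1 hj2] /andP[hk1 hk2]].
have hlD := @stop_lt _ _ _ hl.
case: (hl) => hl0 hpos.
have hbpos : 0 < lam K D (i.*2).+1 := hpos _ hil.
have hadiv := @lam_divn K D (i.*2) hbpos.
have heb := @lam_lt K D (i.*2) hbpos.
have ha0 : lam K D i.*2 <= lam K D 0.
  apply: lam_le0; apply/negP => /eqP h; have := odd_double i; rewrite h //.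
have he0 : lam K D (i.*2).+2 <= lam K D 0 by apply: lam_le0.
have hbD : lam K D (i.*2).+1 <= D := @lam_anti K D 1 (i.*2).+1 isT isT.
have hKD : lam K D 0 = K - D by [].
have eA : forall k0 : nat, K - D - lam K D i.*2 <= k0 < K - D - lam K D (i.*2).+2 ->
    AIR_entry K D l j k0 = even_entry K D i j k0.
  by move=> k0 hk0; apply: entryA => //; rewrite hj1 hj2.
have hE : even_entry K D i j k.
  by move: h1; rewrite mxE eA ?hk1 ?hk2 //; case: (even_entry _ _ _ _ _).
move: hE; rewrite /even_entry /= => /eqP hE.
have hkr2 : k - (K - D - lam K D i.*2) < beta K D i.*2 * lam K D (i.*2).+1 by clear -hk1 hk2 hadiv; lia.
have hB0 : 0 < beta K D i.*2.
  by move: hkr2; case: (beta K D i.*2) => //; rewrite mul0n.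
have hpb : lam K D (i.*2).+1 <= beta K D i.*2 * lam K D (i.*2).+1 by rewrite leq_pmull.
have hq : (beta K D i.*2 - 1) * lam K D (i.*2).+1 =
    beta K D i.*2 * lam K D (i.*2).+1 - lam K D (i.*2).+1 by rewrite mulnBl mul1n.
move=> _ hkr.
have hk' : k + lam K D (i.*2).+1 < K - D by clear -hk1 hkr hq hadiv ha0 hKD hpb; lia.
split => //; split.
  exists (Ordinal hk'); split => //.
  rewrite mxE; apply: nb1; rewrite eA /=; last first.
    by rewrite /=; apply/andP; split; clear -hk1 hkr hq hadiv hpb ha0 hKD; lia.
  rewrite /even_entry /=.
  have -> : k + lam K D (i.*2).+1 - (K - D - lam K D i.*2) =
     k - (K - D - lam K D i.*2) + lam K D (i.*2).+1 by clear -hk1; lia.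
  by rewrite modnDr hE.
move=> k'' /andP[hk1'' hk2''].
rewrite mxE; apply: nb0; rewrite eA /=; last first.
  by apply/andP; split; clear -hk1 hk1'' hk2'' hkr hq hadiv hpb ha0 hKD; lia.
rewrite /even_entry /= hE.
have -> : k'' - (K - D - lam K D i.*2) =
   k - (K - D - lam K D i.*2) + (k'' - k) by clear -hk1 hk1''; lia.
rewrite eq_sym; apply: mod_neq; clear -hk1'' hk2''; lia.
Qed.

Lemma part2 (K D l : nat) (hD1 : 1 <= D) (hDK : D <= K - 1)
    (hl : is_stop K D l)
    (i : nat) (j : 'I_K) (k : 'I_(K - D))
    (hblk : in_even_block K D l i j k)
    (h1 : AIR K D l j k = 1%N) :
  (forall c d : nat, i.+1 <= l./2 ->
     (beta K D i.*2 - 1) * lam K D (i.*2).+1 <= k - (K - D - lam K D i.*2) <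
       beta K D i.*2 * lam K D (i.*2).+1 ->
     j - (K - lam K D (i.*2).+1) = c * lam K D (i.*2).+2 + d -> d < lam K D (i.*2).+2 ->
     is_dright (AIR K D l) j k (lam K D (i.*2).+1 - c * lam K D (i.*2).+2)).
Proof.
cbv zeta.
move: (hblk) => /and4P[hil hb0 /andP[hj1 hj2] /andP[hk1 hk2]].
have hlD := @stop_lt _ _ _ hl.
case: (hl) => hl0 hpos.
have hbpos : 0 < lam K D (i.*2).+1 := hpos _ hil.
have hadiv := @lam_divn K D (i.*2) hbpos.
have heb := @lam_lt K D (i.*2) hbpos.
have ha0 : lam K D i.*2 <= lam K D 0.
  apply: lam_le0; apply/negP => /eqP h; have := odd_double i; rewrite h //.
have he0 : lam K D (i.*2).+2 <= lam K D 0 by apply: lam_le0.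
have hbD : lam K D (i.*2).+1 <= D := @lam_anti K D 1 (i.*2).+1 isT isT.
have hKD : lam K D 0 = K - D by [].
have eA : forall k0 : nat, K - D - lam K D i.*2 <= k0 < K - D - lam K D (i.*2).+2 ->
    AIR_entry K D l j k0 = even_entry K D i j k0.
  by move=> k0 hk0; apply: entryA => //; rewrite hj1 hj2.
have hE : even_entry K D i j k.
  by move: h1; rewrite mxE eA ?hk1 ?hk2 //; case: (even_entry _ _ _ _ _).
move: hE; rewrite /even_entry /= => /eqP hE.
have hkr2 : k - (K - D - lam K D i.*2) < beta K D i.*2 * lam K D (i.*2).+1 by clear -hk1 hk2 hadiv; lia.
have hB0 : 0 < beta K D i.*2.
  by move: hkr2; case: (beta K D i.*2) => //; rewrite mul0n.
have hpb : lam K D (i.*2).+1 <= beta K D i.*2 * lam K D (i.*2).+1 by rewrite leq_pmull.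
have hq : (beta K D i.*2 - 1) * lam K D (i.*2).+1 =
    beta K D i.*2 * lam K D (i.*2).+1 - lam K D (i.*2).+1 by rewrite mulnBl mul1n.
move=> c d hi2 /andP[hkr1 _] hjr hd.
have hl2 : (i.*2).+2 <= l by have := odd_double_half l; clear -hi2; lia.
have hepos : 0 < lam K D (i.*2).+2 := hpos _ (ltnW hl2).
have hfpos : 0 < lam K D (i.*2).+3 := hpos _ hl2.
have hbdiv := @lam_divn K D (i.*2).+1 hepos.
have hfe := @lam_lt K D (i.*2).+1 hepos.
have hediv := @lam_divn K D (i.*2).+2 hfpos.
have hgf := @lam_lt K D (i.*2).+2 hfpos.
have hkrmod : (k - (K - D - lam K D i.*2)) %% lam K D (i.*2).+1 =
    k - (K - D - lam K D i.*2) - (beta K D i.*2 - 1) * lam K D (i.*2).+1.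
  rewrite {1}(_ : k - (K - D - lam K D i.*2) = (beta K D i.*2 - 1) * lam K D (i.*2).+1
     + (k - (K - D - lam K D i.*2) - (beta K D i.*2 - 1) * lam K D (i.*2).+1)); last first.
    by rewrite subnKC.
  rewrite modnMDl modn_small //; clear -hkr1 hkr2 hq hpb; lia.
rewrite hkrmod in hE.
have hjb : j - (K - lam K D (i.*2).+1) < lam K D (i.*2).+1
  by clear -hE hkr1 hkr2 hq hpb; lia.
have hjv : (j : nat) = K - lam K D (i.*2).+1 + (j - (K - lam K D (i.*2).+1))
  by clear -hj1; lia.
have hbK : lam K D (i.*2).+1 <= K by clear -hbD hDK hD1; lia.
have hce : c * lam K D (i.*2).+2 + d < lam K D (i.*2).+1 by clear -hjb hjr; lia.
have hk' : K - D - lam K D (i.*2).+2 + d < K - D by clear -hd he0 hKD; lia.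
have hkk' : (K - D - lam K D (i.*2).+2 + d) =
   k + (lam K D (i.*2).+1 - c * lam K D (i.*2).+2).
  clear -hk1 hadiv ha0 hKD hE hjr hq hpb hkr1 hce; lia.
have z0 : forall k'' : nat, k < k'' -> k'' < K - D - lam K D (i.*2).+2 ->
    ~~ AIR_entry K D l j k''.
  move=> k'' hk1'' hk2''; rewrite eA; last by clear -hk1 hk1'' hk2''; lia.
  rewrite /even_entry /= hE.
  have -> : k'' - (K - D - lam K D i.*2) =
     k - (K - D - lam K D i.*2) + (k'' - k) by clear -hk1 hk1''; lia.
  rewrite -hkrmod eq_sym; apply: mod_neq.
  clear -hk1'' hk2'' hk1 hadiv hkr1 hq hpb ha0 hKD; lia.
case: (ltnP c (beta K D (i.*2).+1)) => hcb.
+ have hcb' : c.+1 * lam K D (i.*2).+2 <= beta K D (i.*2).+1 * lam K D (i.*2).+2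
    by rewrite leq_mul2r hcb orbT.
  rewrite mulSn in hcb'.
  have hjr2 : j < K - lam K D (i.*2).+3.
    clear -hjv hbK hjr hcb' hbdiv hd; lia.
  have eB : forall k0 : nat, K - D - lam K D (i.*2).+2 <= k0 ->
      AIR_entry K D l j k0 = in_odd_block K D l i j k0 && odd_entry K D i j k0.
    move=> k0 hk0; apply: entryB => //; first by clear -hl2; lia.
    by rewrite hj1 hjr2.
  split; first by clear -hce; lia.
  split.
    exists (Ordinal hk'); split; first by rewrite /= hkk'.
    rewrite mxE; apply: nb1; rewrite eB /=; last by clear; lia.
    apply/andP; split.
      rewrite /in_odd_block hj1 hjr2 hk' /= andbT.
      apply/andP; split; [clear -hl2; lia | clear; lia].
    rewrite /odd_entry /= hjr modnMDl modn_small //.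
    apply/eqP; clear; lia.
  move=> k'' /andP[hk1'' hk2''].
  rewrite mxE; apply: nb0.
  case: (ltnP k'' (K - D - lam K D (i.*2).+2)) => hkk.
    exact: z0.
  rewrite eB // negb_and; apply/orP; right.
  rewrite /odd_entry /= hjr modnMDl modn_small //.
  apply/negP => /eqP; clear -hk2'' hkk' hkk; lia.
+ have hcb2 : c * lam K D (i.*2).+2 < (beta K D (i.*2).+1).+1 * lam K D (i.*2).+2.
    rewrite mulSn; clear -hce hbdiv hfe; lia.
  rewrite ltn_mul2r hepos /= ltnS in hcb2.
  have ec : c = beta K D (i.*2).+1 by apply/eqP; rewrite eqn_leq hcb hcb2.
  subst c.
  have hB2 : 0 < beta K D (i.*2).+2.
    move: hediv; case: (beta K D (i.*2).+2) => //; rewrite mul0n add0n => E.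
    clear -E hgf hfe; lia.
  have hfB : lam K D (i.*2).+3 <= beta K D (i.*2).+2 * lam K D (i.*2).+3
    by rewrite leq_pmull.
  have hdf : d < lam K D (i.*2).+3 by clear -hce hbdiv; lia.
  have hjf : j - (K - lam K D (i.*2).+3) = d.
    clear -hjv hbK hjr hbdiv; lia.
  have hj1' : K - lam K D (i.*2).+3 <= j by clear -hjv hbK hjr hbdiv; lia.
  have eA1 : forall k0 : nat, K - D - lam K D (i.*2).+2 <= k0 ->
      k0 < K - D - lam K D (i.*2).+4 ->
      AIR_entry K D l j k0 = even_entry K D i.+1 j k0.
    move=> k0 hk01 hk02; apply: entryA => //; rewrite ?doubleS //.
      by rewrite hj1' hj2.
    by rewrite hk01 hk02.
  split; first by clear -hbdiv hfpos; lia.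
  split.
    exists (Ordinal hk'); split; first by rewrite /= hkk'.
    rewrite mxE; apply: nb1; rewrite eA1 /=; first last.
      - clear -hdf hfB hediv he0 hKD hd; lia.
      - clear; lia.
    rewrite /even_entry /= !doubleS hjf.
    rewrite modn_small; last by clear -hdf; lia.
    apply/eqP; clear; lia.
  move=> k'' /andP[hk1'' hk2''].
  rewrite mxE; apply: nb0.
  case: (ltnP k'' (K - D - lam K D (i.*2).+2)) => hkk.
    exact: z0.
  rewrite eA1 //; last first.
    clear -hkk hk2'' hkk' hdf hfB hediv he0 hKD hd; lia.
  rewrite /even_entry /= !doubleS hjf modn_small; last first.
    clear -hkk hk2'' hkk' hdf; lia.
  apply/negP => /eqP; clear -hk2'' hkk' hkk; lia.
Qed.

Theorem lemma3 (K D l : nat) (hD1 : 1 <= D) (hDK : D <= K - 1)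
    (hl : is_stop K D l)
    (i : nat) (j : 'I_K) (k : 'I_(K - D))
    (hblk : in_even_block K D l i j k)
    (h1 : AIR K D l j k = 1%N) :
  let jR := j - (K - lam K D (i.*2).+1) in
  let kR := k - (K - D - lam K D i.*2) in
  (i <= l./2 ->
     kR < (beta K D i.*2 - 1) * lam K D (i.*2).+1 ->
     is_dright (AIR K D l) j k (lam K D (i.*2).+1)) /\
  (forall c d : nat, i.+1 <= l./2 ->
     (beta K D i.*2 - 1) * lam K D (i.*2).+1 <= kR <
       beta K D i.*2 * lam K D (i.*2).+1 ->
     jR = c * lam K D (i.*2).+2 + d -> d < lam K D (i.*2).+2 ->
     is_dright (AIR K D l) j k (lam K D (i.*2).+1 - c * lam K D (i.*2).+2)).
Proof.
split; [exact: part1 | exact: part2].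
Qed.
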